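(* Let $T=(T_a,T_b)$ be the GFB tree with $n\geq 2$ leaves. Then $T_a$ and $T_b$ are also GFB trees (i.e. $T_a=T^{gfb}_{n_a}$ and $T_b=T^{gfb}_{n_b}$, where $n_a,n_b$ are their numbers of leaves).
   Context: A rooted binary tree with $n\geq 2$ leaves is a rooted tree whose root has degree 2 and all other internal nodes have degree 3; for $n=1$ it is a single node. Trees are considered up to isomorphism. $T=(T_a,T_b)$ denotes the decomposition into the subtrees rooted at the two children of the root. The GFB tree $T_n^{gfb}$ is the output of: start with $n$ single-node trees; while more than one tree remains, remove a tree $u$ of minimal size (number of leaves), then remove a tree $v$ of minimal size among the remaining ones, and insert the tree with a new root whose children are the roots of $u$ and $v$; output the remaining tree. *)

(* Defs.v *)
From mathcomp Require Import all_boot.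
From Stdlib Require Import Permutation Relation_Operators.
Set Implicit Arguments. Unset Strict Implicit. Unset Printing Implicit Defensive.

Inductive btree : Type :=
| Leaf : btree
| Node : btree -> btree -> btree.

Fixpoint nleaves (t : btree) : nat :=
  match t with Leaf => 1 | Node a b => nleaves a + nleaves b end.

Inductive iso : btree -> btree -> Prop :=
| iso_leaf : iso Leaf Leaf
| iso_node a b a' b' : iso a a' -> iso b b' -> iso (Node a b) (Node a' b')
| iso_swap a b a' b' : iso a b' -> iso b a' -> iso (Node a b) (Node a' b').

(* One step of the GFB process on a multiset (list up to permutation) of
   trees: remove a tree u of minimal size, then a tree v of minimal size
   among the remaining ones, and insert the tree with root children u, v. *)
Definition gfb_step (s s' : seq btree) : Prop :=
  exists u v r,
    Permutation s (u :: v :: r) /\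
    (forall t, List.In t (v :: r) -> nleaves u <= nleaves t) /\
    (forall t, List.In t r -> nleaves v <= nleaves t) /\
    s' = Node u v :: r.

Definition gfb_output (n : nat) (T : btree) : Prop :=
  clos_refl_trans (seq btree) gfb_step (nseq n Leaf) [:: T].

(* T is "the" GFB tree with n leaves (trees considered up to isomorphism). *)
Definition is_gfb (n : nat) (T : btree) : Prop :=
  exists T', gfb_output n T' /\ iso T T'.

(* Main.v *)
Require Import Defs.
From mathcomp Require Import all_boot.
From Stdlib Require Import Permutation Relation_Operators Operators_Properties Lia.
From mathcomp Require Import zify.

Definition reach := clos_refl_trans (seq btree) gfb_step.

Lemma reach_perm x y t : Permutation x y -> reach y t ->
  exists t', reach x t' /\ Permutation t' t.
Proof.
move=> Hp /clos_rt_rt1n_iff H; case: H Hp.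
- move=> Hp; exists x; split; [apply: rt_refl| exact Hp].
- move=> y1 z Hs Hr Hp; exists z; split; last by apply: Permutation_refl.
  apply: rt_trans (rt_step _ _ _ _ _) (clos_rt1n_rt _ _ _ _ Hr).
  case: Hs => [u [v [r [H1 [H2 [H3 H4]]]]]].
  exists u, v, r; split => //; exact: Permutation_trans Hp H1.
Qed.

Lemma split_step u v r sa1 sb1 :
  (forall t, List.In t (v :: r) -> nleaves u <= nleaves t) ->
  (forall t, List.In t r -> nleaves v <= nleaves t) ->
  Permutation (Node u v :: r) (sa1 ++ sb1) -> List.In (Node u v) sa1 ->
  exists sa', Permutation r (sa' ++ sb1) /\
    gfb_step (u :: v :: sa') (Node u v :: sa') /\
    Permutation (Node u v :: sa') sa1.
Proof.
move=> H2 H3 Hp Hin.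
case: (List.in_split _ _ Hin) => l1 [l2 E]; subst sa1.
exists (l1 ++ l2).
have Hm : Permutation (l1 ++ Node u v :: l2) (Node u v :: l1 ++ l2).
  by apply: Permutation_sym; apply: Permutation_middle.
have Hr : Permutation r (l1 ++ l2 ++ sb1).
  apply: (Permutation_cons_inv (a := Node u v)).
  apply: Permutation_trans Hp _.
  rewrite -catA /=.
  apply: Permutation_sym; apply: Permutation_middle.
split; first by rewrite -catA.
split; last by apply: Permutation_sym.
exists u, v, (l1 ++ l2); split; first by apply: Permutation_refl.
split; [|split=>//].
- move=> t [<-|Ht]; first by apply: H2; left.
  apply: H2; right; apply: Permutation_in (Permutation_sym Hr) _.
  rewrite catA; apply: List.in_or_app; by left.
- move=> t Ht; apply: H3; apply: Permutation_in (Permutation_sym Hr) _.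
  rewrite catA; apply: List.in_or_app; by left.
Qed.

Lemma claim s t : reach s t -> forall ta tb, Permutation t (ta ++ tb) ->
  exists sa sb, Permutation s (sa ++ sb) /\
    (exists ta', reach sa ta' /\ Permutation ta' ta) /\
    (exists tb', reach sb tb' /\ Permutation tb' tb).
Proof.
move=> /clos_rt_rt1n_iff H; elim: H.
- move=> x ta tb Hp; exists ta, tb; split => //.
  split; [exists ta | exists tb]; split; (apply: rt_refl || apply: Permutation_refl).
- move=> x y z Hs _ IH ta tb Hp.
  case: (IH ta tb Hp) => sa1 [sb1 [Hp1 [[ta' [Ra Pa]] [tb' [Rb Pb]]]]].
  case: Hs => [u [v [r [H1 [H2 [H3 E]]]]]]; subst y.
  have Hin : List.In (Node u v) (sa1 ++ sb1).
    by apply: Permutation_in Hp1 _; left.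
  case: (List.in_app_or _ _ _ Hin) => Hin'.
  + case: (@split_step u v r _ _ H2 H3 Hp1 Hin') => sa' [Pr [St Pm]].
    exists (u :: v :: sa'), sb1; split.
      apply: Permutation_trans H1 _; simpl; do 2 apply: perm_skip; exact Pr.
    split; last by exists tb'.
    case: (@reach_perm _ _ _ Pm Ra) => t2 [R2 P2].
    exists t2; split; last by apply: Permutation_trans P2 Pa.
    apply: rt_trans R2; exact: rt_step.
  + have Hp2 : Permutation (Node u v :: r) (sb1 ++ sa1).
      by apply: Permutation_trans Hp1 (Permutation_app_comm _ _).
    case: (@split_step u v r _ _ H2 H3 Hp2 Hin') => sb' [Pr [St Pm]].
    exists sa1, (u :: v :: sb'); split.
      apply: Permutation_trans H1 _.
      apply: Permutation_trans (Permutation_app_comm _ _).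
      simpl; do 2 apply: perm_skip; exact Pr.
    split; first by exists ta'.
    case: (@reach_perm _ _ _ Pm Rb) => t2 [R2 P2].
    exists t2; split; last by apply: Permutation_trans P2 Pb.
    apply: rt_trans R2; exact: rt_step.
Qed.

Fixpoint lsum (s : seq btree) : nat :=
  match s with [::] => 0 | x :: s' => nleaves x + lsum s' end.

Lemma lsum_perm s t : Permutation s t -> lsum s = lsum t.
Proof. elim => //= [x l l' _ IH|x y l|l l' l'' _ IH1 _ IH2]; lia. Qed.

Lemma lsum_reach s t : reach s t -> lsum s = lsum t.
Proof.
elim => //.
- move=> x y [u [v [r [H1 [_ [_ ->]]]]]].
  rewrite (@lsum_perm _ _ H1) /=; lia.
- move=> *; congruence.
Qed.

Lemma all_leaf sa : (forall x, List.In x sa -> x = Leaf) ->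
  sa = nseq (size sa) Leaf /\ lsum sa = size sa.
Proof.
elim: sa => //= x s IH H.
have [E1 E2] := IH (fun y Hy => H y (or_intror Hy)).
rewrite (H x (or_introl erefl)) /=; split; [congr cons; exact E1| lia].
Qed.

Lemma in_nseq n x : List.In x (nseq n Leaf) -> x = Leaf.
Proof. elim: n => //= n IH [<-|H] //; exact: IH. Qed.

Lemma iso_nleaves a b : iso a b -> nleaves a = nleaves b.
Proof. elim => //= *; lia. Qed.

Lemma iso_refl a : iso a a.
Proof. elim: a => [|a Ha b Hb]; constructor => //. Qed.

Lemma sub_gfb n a b : gfb_output n (Node a b) ->
  gfb_output (nleaves a) a /\ gfb_output (nleaves b) b.
Proof.
move=> /clos_rt_rtn1_iff H.
inversion H as [E|y z Hs Hr E].
  by clear H; move: E; case: n => [|[|n]].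
subst z.
case: Hs => [u [v [r [H1 [_ [_ E]]]]]].
case: E => -> -> Er; subst r.
have Hr' : reach (nseq n Leaf) y by apply/clos_rt_rtn1_iff.
case: (@claim _ _ Hr' [:: _] [:: _] H1)
  => sa [sb [Hp [[ta' [Ra Pa]] [tb' [Rb Pb]]]]].
have Ea := Permutation_length_1_inv (Permutation_sym Pa); subst ta'.
have Eb := Permutation_length_1_inv (Permutation_sym Pb); subst tb'.
have La : forall x, List.In x sa -> x = Leaf.
  move=> x Hx; apply: (@in_nseq n); apply: Permutation_in (Permutation_sym Hp) _.
  apply: List.in_or_app; by left.
have Lb : forall x, List.In x sb -> x = Leaf.
  move=> x Hx; apply: (@in_nseq n); apply: Permutation_in (Permutation_sym Hp) _.
  apply: List.in_or_app; by right.
have [Sa Sa'] := @all_leaf _ La; have [Sb Sb'] := @all_leaf _ Lb.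
have Ka := @lsum_reach _ _ Ra; have Kb := @lsum_reach _ _ Rb.
rewrite /= addn0 Sa' in Ka; rewrite /= addn0 Sb' in Kb.
split; rewrite /gfb_output.
- by rewrite -Ka -Sa.
- by rewrite -Kb -Sb.
Qed.

Theorem lemma6 (n : nat) (Ta Tb : btree) :
  2 <= n -> is_gfb n (Node Ta Tb) ->
  is_gfb (nleaves Ta) Ta /\ is_gfb (nleaves Tb) Tb.
Proof.
move=> _ [T' [HT Hi]].
inversion Hi; subst.
- have [G1 G2] := @sub_gfb _ _ _ HT.
  rewrite (@iso_nleaves _ _ H1) (@iso_nleaves _ _ H3).
  by split; [exists a' | exists b'].
- have [G1 G2] := @sub_gfb _ _ _ HT.
  rewrite (@iso_nleaves _ _ H1) (@iso_nleaves _ _ H3).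
  by split; [exists b' | exists a'].
Qed.
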